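(* Let $X$ be a connected metric space, $\mathcal M=\{M_1,\dots,M_n\}\subset\mathcal P^f_{\mathrm{Cl}}(X)$, $\Sigma(\mathcal M)\neq\emptyset$ and $d=(d_1,\dots,d_n)\in\Omega(\mathcal M)$. Then there exists $i$ with $d_i=\sup_{x\in K_d}|x\,M_i|$.
   Context: For a metric space $X$, $p\in X$, $A\subset X$: $|p\,A|=\inf_{a\in A}|p\,a|$ ($=\infty$ if $A=\emptyset$); for $0\le r<\infty$, $B_r(A)=\{p:|p\,A|\le r\}$. For nonempty $A,B$, $d_H(A,B)=\max\{\sup_{a\in A}|a\,B|,\sup_{b\in B}|b\,A|\}\in[0,\infty]$. $\mathcal P_{\mathrm{Cl}}(X)$ is the set of nonempty closed subsets of $X$ with $d_H$. A finiteness class of $\mathcal P_{\mathrm{Cl}}(X)$ is an equivalence class of the relation $A\sim B\iff d_H(A,B)<\infty$; $\mathcal P^f_{\mathrm{Cl}}(X)$ denotes a fixed finiteness class. For finite $\mathcal M=\{M_1,\dots,M_n\}\subset\mathcal P^f_{\mathrm{Cl}}(X)$, set $S_{\mathcal M}(Y)=\sum_{i=1}^n d_H(Y,M_i)$ for $Y\in\mathcal P^f_{\mathrm{Cl}}(X)$; $\Sigma(\mathcal M)$ is the set of all minimizers of $S_{\mathcal M}$ over $\mathcal P^f_{\mathrm{Cl}}(X)$. For $K\in\Sigma(\mathcal M)$, $d(K)=(d_H(K,M_1),\dots,d_H(K,M_n))$; $\Omega(\mathcal M)=\{d(K):K\in\Sigma(\mathcal M)\}$; for $d=(d_1,\dots,d_n)\in\Omega(\mathcal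 M)$, $\Sigma_d(\mathcal M)=\{K\in\Sigma(\mathcal M):d(K)=d\}$, partially ordered by inclusion; and $K_d=\bigcap_{i=1}^n B_{d_i}(M_i)$. *)

(* Defs.v *)
From HB Require Import structures.
From mathcomp Require Import all_boot all_order all_algebra.
From mathcomp Require Import all_classical all_reals ereal.
Set Implicit Arguments. Unset Strict Implicit. Unset Printing Implicit Defensive.
Import Order.TTheory GRing.Theory Num.Theory.
Local Open Scope classical_set_scope.
Local Open Scope ring_scope.

Section MetricDefs.
Variables (R : realType) (T : Type) (dist : T -> T -> R).

Definition is_metric : Prop :=
  (forall x y, 0 <= dist x y) /\
  (forall x y, dist x y = 0 <-> x = y) /\
  (forall x y, dist x y = dist y x) /\
  (forall x y z, dist x z <= dist x y + dist y z).

Definition mopen (U : set T) : Prop :=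
  forall x, U x -> exists2 e : R, 0 < e & forall y, dist x y < e -> U y.

Definition mclosed (A : set T) : Prop := mopen (~` A).

Definition mconnected : Prop :=
  forall U V : set T, mopen U -> mopen V -> U `&` V = set0 -> U `|` V = setT ->
    U = set0 \/ V = set0.

(* |p A| = inf_{a in A} |p a|  (= +oo if A is empty) *)
Definition ptdist (p : T) (A : set T) : \bar R :=
  ereal_inf [set (dist p a)%:E | a in A].

Definition mball (r : R) (A : set T) : set T :=
  [set p | (ptdist p A <= r%:E)%E].

Definition hausdorff (A B : set T) : \bar R :=
  maxe (ereal_sup [set ptdist a B | a in A]) (ereal_sup [set ptdist b A | b in B]).

Definition PCl (A : set T) : Prop := A !=set0 /\ mclosed A.

(* the finiteness class of C0 in P_Cl(X) *)
Definition fclass (C0 : set T) : set (set T) :=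
  [set Y | PCl Y /\ (hausdorff Y C0 < +oo)%E].

Variables (C0 : set T) (n : nat) (M : 'I_n -> set T).

Definition SM (Y : set T) : \bar R := (\sum_(i < n) hausdorff Y (M i))%E.

Definition Sigma : set (set T) :=
  [set K | fclass C0 K /\ forall Y, fclass C0 Y -> (SM K <= SM Y)%E].

Definition Omega (d : 'I_n -> R) : Prop :=
  exists2 K, Sigma K & forall i, hausdorff K (M i) = (d i)%:E.

Definition Kd (d : 'I_n -> R) : set T := [set p | forall i, mball (d i) (M i) p].

End MetricDefs.

(* Main.v *)
Require Import Defs.
From HB Require Import structures.
From mathcomp Require Import all_boot all_order all_algebra.
From mathcomp Require Import all_classical all_reals ereal.
From mathcomp Require Import lra.
Import Order.TTheory GRing.Theory Num.Theory.
Local Open Scope classical_set_scope.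
Local Open Scope ring_scope.

Section Aux.
Variables (R : realType) (T : Type) (dist : T -> T -> R).
Hypothesis hm : is_metric dist.

Lemma ptdist_ge0 p A : (0 <= ptdist dist p A)%E.
Proof. apply/ereal_infP => _ [a Aa <-]; rewrite lee_fin; exact: hm.1. Qed.

Lemma ptdist_le p A a : A a -> (ptdist dist p A <= (dist p a)%:E)%E.
Proof. by move=> Aa; apply: ereal_inf_lbound; exists a. Qed.

Lemma ptdist_lip y x A :
  (ptdist dist y A <= (dist y x)%:E + ptdist dist x A)%E.
Proof.
rewrite -leeBlDl //; apply/ereal_infP => _ [a Aa <-].
rewrite leeBlDl //; apply: le_trans (ptdist_le y _ _ Aa) _.
rewrite -EFinD lee_fin; exact: hm.2.2.2.
Qed.

Lemma ptdist_hd x A B h : (forall a, A a -> ptdist dist a B <= h%:E)%E ->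
  (ptdist dist x B <= ptdist dist x A + h%:E)%E.
Proof.
move=> hA; rewrite -leeBlDr //; apply/ereal_infP => _ [a Aa <-].
rewrite leeBlDr //; apply: le_trans (ptdist_lip x a B) _.
by rewrite leeD2l // hA.
Qed.

End Aux.
Arguments ptdist_ge0 {R T dist}.
Arguments ptdist_le {R T dist}.
Arguments ptdist_lip {R T dist}.
Arguments ptdist_hd {R T dist}.

Theorem mainTheorem20 (R : realType) (T : Type) (dist : T -> T -> R)
  (C0 : set T) (n : nat) (M : 'I_n -> set T) (d : 'I_n -> R) :
  is_metric dist -> mconnected dist ->
  PCl dist C0 ->
  (0 < n)%N -> injective M ->
  (forall i, fclass dist C0 (M i)) ->
  Sigma dist C0 M !=set0 ->
  Omega dist C0 M d ->
  exists i : 'I_n,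
    (d i)%:E = ereal_sup [set ptdist dist x (M i) | x in Kd dist M d].
Proof.
move=> hm hconn hC0 n0 injM hM _ [K [[hKPCl hKfin] hKmin] hKd].
apply: contrapT => hno.
set S := fun i => ereal_sup [set ptdist dist x (M i) | x in Kd dist M d].
have hne : forall i, (d i)%:E <> S i by move=> i e; apply: hno; exists i.
have KsubKd : forall k, K k -> Kd dist M d k.
  move=> k Kk i; rewrite /mball /= -hKd /hausdorff.
  rewrite le_max; apply/orP; left; apply: ereal_sup_ubound; by exists k.
have [k0 Kk0] := hKPCl.1.
have S_le : forall i, (S i <= (d i)%:E)%E.
  by move=> i; apply: ge_ereal_sup => _ [x Kx <-]; exact: Kx i.
have S_ub : forall i x, Kd dist M d x -> (ptdist dist x (M i) <= S i)%E.
  by move=> i x Kx; apply: ereal_sup_ubound; exists x.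
have S_ge0 : forall i, (0 <= S i)%E.
  move=> i; apply: le_trans (ptdist_ge0 hm k0 (M i)) _.
  exact: S_ub (KsubKd _ Kk0).
have S_lt : forall i, (S i < (d i)%:E)%E.
  by move=> i; rewrite lt_neqAle S_le andbT; apply/eqP => e; apply: (hne i).
pose si i := fine (S i).
have SE : forall i, S i = (si i)%:E.
  move=> i; rewrite /si fineK // ge0_fin_numE //.
  exact: lt_trans (S_lt i) (ltey _).
have si_lt : forall i, si i < d i by move=> i; rewrite -lte_fin -SE.
pose eps := \big[Num.min/1]_(i < n) (d i - si i).
have eps_gt0 : 0 < eps.
  apply: lt_bigmin => // i _; by rewrite subr_gt0.
have eps_le : forall i, eps <= d i - si i by move=> i; exact: bigmin_le.
have key : forall x y, Kd dist M d x -> dist x y < eps -> Kd dist M d y.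
  move=> x y Kx hxy i; rewrite /mball /=.
  apply: le_trans (ptdist_lip hm y x (M i)) _.
  apply: le_trans (leeD2l _ (S_ub i x Kx)) _.
  rewrite SE -EFinD lee_fin (hm.2.2.1 y x).
  have := eps_le i; lra.
have hU : mopen dist (Kd dist M d).
  by move=> x Kx; exists eps => // y; exact: key.
have hV : mopen dist (~` Kd dist M d).
  move=> x nKx; exists eps => // y hy Ky; apply: nKx; apply: key Ky _.
  by rewrite (hm.2.2.1 y x).
have KdT : forall x, Kd dist M d x.
  case: (hconn _ _ hU hV (setICr _) (setUCr _)) => h.
    by have : (set0 : set T) k0 by rewrite -h; exact: KsubKd.
  move=> x; apply: contrapT => nx.
  by have : (set0 : set T) x by rewrite -h.
pose i0 : 'I_n := Ordinal n0.
have [[[m0 Mm0] _] hMfin] := hM i0.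
set h := hausdorff dist (M i0) C0 in hMfin.
have hMb : forall m, M i0 m -> (ptdist dist m C0 <= h)%E.
  move=> m Mm; rewrite /h /hausdorff le_max; apply/orP; left.
  by apply: ereal_sup_ubound; exists m.
have h_ge0 : (0 <= h)%E := le_trans (ptdist_ge0 hm m0 C0) (hMb m0 Mm0).
have hE : h = (fine h)%:E by rewrite fineK // ge0_fin_numE.
have hT : fclass dist C0 setT.
  split; first split.
  - by exists k0.
  - by move=> x /= [].
  rewrite /hausdorff gt_max; apply/andP; split.
    apply: (@le_lt_trans _ _ ((d i0 + fine h)%:E)); last exact: ltey.
    apply: ge_ereal_sup => _ [x _ <-].
    apply: le_trans (ptdist_hd hm x (M i0) C0 (fine h) _) _.
      by move=> a Ma; rewrite -hE; exact: hMb.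
    by rewrite EFinD leeD2r //; exact: (KdT x i0).
  apply: (@le_lt_trans _ _ 0%E); last exact: ltey.
  apply: ge_ereal_sup => _ [c _ <-].
  apply: le_trans (ptdist_le c setT c I) _.
  by rewrite lee_fin (proj2 (hm.2.1 c c) erefl).
have := hKmin _ hT.
apply/negP; rewrite -ltNge.
have -> : SM dist M K = (\sum_(i < n) d i)%:E.
  by rewrite /SM -sumEFin; apply: eq_bigr => i _; rewrite hKd.
apply: (@le_lt_trans _ _ ((\sum_(i < n) si i)%:E)).
  rewrite /SM -sumEFin; apply: lee_sum => i _.
  rewrite /hausdorff ge_max; apply/andP; split.
    rewrite -SE; apply: ge_ereal_sup => _ [x _ <-]; exact: S_ub (KdT x).
  apply: ge_ereal_sup => _ [c _ <-].
  apply: le_trans (ptdist_le c setT c I) _.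
  by rewrite (proj2 (hm.2.1 c c) erefl) -SE.
rewrite lte_fin (bigD1 i0) //= [X in _ < X](bigD1 i0) //=.
apply: ltr_leD; first exact: si_lt.
by apply: ler_sum => i _; exact: ltW.
Qed.
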